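(* Let $n\geq 1$ and $0\leq m\leq n$, and let $S$ range over subsets of $\{1,\dots,n\}$ with $|S|=m$, $S^c=\{1,\dots,n\}\setminus S$. Then \begin{equation*} \sum_{\substack{S~\textrm{with}\\|S| = m}} \bigg(\prod_{\substack{\alpha<\beta,\\\alpha,\beta \in S^c}} T_{\beta\alpha}\bigg)\bigg(\prod_{\substack{\alpha<\beta,\\\alpha,\beta \in S}} T_{\beta\alpha}\bigg)\bigg( \prod_{\substack{\alpha<\beta,\\\ \alpha\in S, \beta \in S^c}} S_{\beta\alpha}\bigg) = \frac{[n]!}{[n-m]!\,[m]!}\bigg(\prod_{\substack{\alpha<\beta,\\ \alpha,\beta \in \{1,\dots, n\}} }T_{\beta\alpha}\bigg). \end{equation*}
   Context: Here $p\in(0,1)$, $q=1-p$, and $\xi_1,\dots,\xi_n$ are complex variables, with $S_{\beta\alpha} = -\frac{p+q\xi_{\alpha}\xi_{\beta} - \xi_{\beta}}{p+q\xi_{\alpha}\xi_{\beta} - \xi_{\alpha}}$ and $T_{\beta\alpha} = \frac{\xi_{\beta}-\xi_{\alpha}}{p+q\xi_{\alpha}\xi_{\beta} - \xi_{\alpha}}$. For nonnegative integers $k$, $[k] = \frac{p^k-q^k}{p-q}$, $[k]! = [k][k-1]\cdots[1]$ for $k\geq 1$ and $[0]!=1$. (The $(p,q)$-binomial coefficient $\frac{[n]!}{[n-m]![m]!}$ is defined to be $0$ if $m>n$.) *)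

(* Defs.v *)
From mathcomp Require Import all_boot all_order all_algebra.
Set Implicit Arguments. Unset Strict Implicit. Unset Printing Implicit Defensive.
Import Order.TTheory GRing.Theory Num.Theory.
Local Open Scope ring_scope.

(* Indices 1..n of the paper are represented by 'I_n = {0,..,n-1}
   (order-preserving shift). Scalars live in a numClosedFieldType C
   (e.g. algC, or complex numbers). *)

Section Defs.
Variable C : numClosedFieldType.

Definition Sba (p : C) (xi : nat -> C) (b a : nat) : C :=
  - (p + (1 - p) * xi a * xi b - xi b) / (p + (1 - p) * xi a * xi b - xi a).

Definition Tba (p : C) (xi : nat -> C) (b a : nat) : C :=
  (xi b - xi a) / (p + (1 - p) * xi a * xi b - xi a).

(* [k] = (p^k - q^k)/(p - q), written as the polynomial
   sum_{i<k} p^i q^(k-1-i) (equal for p <> q, continuous extension at p = q). *)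
Definition pq_int (p : C) (k : nat) : C :=
  \sum_(i < k) p ^+ i * (1 - p) ^+ (k.-1 - i).

Definition pq_fact (p : C) (k : nat) : C :=
  \prod_(1 <= i < k.+1) pq_int p i.

Definition pq_binom (p : C) (n m : nat) : C :=
  if (m <= n)%N then pq_fact p n / (pq_fact p (n - m) * pq_fact p m) else 0.

End Defs.

(* Main.v *)
Require Import Defs.
From mathcomp Require Import all_boot all_order all_algebra ring zify.
Import Order.TTheory GRing.Theory Num.Theory.
Local Open Scope ring_scope.
Set Implicit Arguments. Unset Strict Implicit.

Section Gen.
Variable R : comNzRingType.
Definition fp (p x y : R) := p + (1 - p) * x * y - x.
Definition E (p : R) (sa sb : bool) (xa xb : R) :=
  if sa == sb then xb - xa else if sa then - fp p xb xa else fp p xa xb.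
Definition w p (xi : nat -> R) n (S : {set 'I_n}) :=
  \prod_(a < n) \prod_(b < n | (a < b)%N) E p (a \in S) (b \in S) (xi a) (xi b).
Definition L p xi n m := \sum_(S : {set 'I_n} | (#|S| == m)%N) w p xi S.
Definition V (xi : nat -> R) n := \prod_(a < n) \prod_(b < n | (a < b)%N) (xi b - xi a).
Fixpoint B (p : R) n m := match n with 0 => (m == 0)%:R
  | n'.+1 => (1 - p) ^+ m * B p n' m + (if m is m'.+1 then p ^+ (n' - m') * B p n' m' else 0) end.

Lemma E_anti p sa sb xa xb : E p sb sa xb xa = - E p sa sb xa xb.
Proof. by rewrite /E eq_sym; case: sa; case: sb => //=; rewrite ?opprK // opprB. Qed.

Definition liftS n (S : {set 'I_n}) : {set 'I_n.+1} := widen_ord (leqnSn n) @: S.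
Definition preS n (S : {set 'I_n.+1}) : {set 'I_n} := [set i | widen_ord (leqnSn n) i \in S].

Lemma ordS_case n (x : 'I_n.+1) : x = ord_max \/ exists i : 'I_n, x = widen_ord (leqnSn n) i.
Proof.
case: (ltnP x n) => h; [right; exists (Ordinal h) | left]; apply: val_inj => //=.
by apply/eqP; rewrite eqn_leq h -ltnS ltn_ord.
Qed.

Lemma widen_inj n : injective (widen_ord (leqnSn n)).
Proof. by move=> i j /(congr1 val) /= h; apply: val_inj. Qed.

Lemma mem_liftS n (S : {set 'I_n}) i : (widen_ord (leqnSn n) i \in liftS S) = (i \in S).
Proof. by rewrite mem_imset //; exact: widen_inj. Qed.

Lemma max_liftS n (S : {set 'I_n}) : (ord_max \in liftS S) = false.
Proof.
apply/negbTE/imsetP => -[i _ /(congr1 val) /= h].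
by move: (ltn_ord i); rewrite -h ltnn.
Qed.

Lemma widen_neq_max n (i : 'I_n) : (widen_ord (leqnSn n) i == ord_max) = false.
Proof. by apply/negbTE; rewrite -(inj_eq val_inj) /= neq_ltn ltn_ord. Qed.

Lemma preS_liftS n (S : {set 'I_n}) : preS (liftS S) = S.
Proof. by apply/setP => i; rewrite inE mem_liftS. Qed.

Lemma preS_liftS1 n (S : {set 'I_n}) : preS (ord_max |: liftS S) = S.
Proof. by apply/setP => i; rewrite !inE widen_neq_max mem_liftS. Qed.

Lemma liftS_preS n (S : {set 'I_n.+1}) : ord_max \notin S -> liftS (preS S) = S.
Proof.
move=> hS; apply/setP => x; case: (ordS_case x) => [->|[i ->]].
  by rewrite max_liftS (negbTE hS).
by rewrite mem_liftS inE.
Qed.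

Lemma liftS_preS1 n (S : {set 'I_n.+1}) : ord_max \in S -> ord_max |: liftS (preS S) = S.
Proof.
move=> hS; apply/setP => x; rewrite in_setU in_set1; case: (ordS_case x) => [->|[i ->]].
  by rewrite eqxx hS.
by rewrite mem_liftS inE widen_neq_max.
Qed.

Lemma card_liftS n (S : {set 'I_n}) : #|liftS S| = #|S|.
Proof. by rewrite card_imset //; exact: widen_inj. Qed.

Lemma card_liftS1 n (S : {set 'I_n}) : #|ord_max |: liftS S| = #|S|.+1.
Proof. by rewrite cardsU1 max_liftS card_liftS. Qed.

Lemma sum_set_split n (G : {set 'I_n.+1} -> R) :
  \sum_(S : {set 'I_n.+1}) G S =
  \sum_(S : {set 'I_n}) (G (liftS S) + G (ord_max |: liftS S)).
Proof.
rewrite big_split /= (bigID (fun S : {set 'I_n.+1} => ord_max \in S)) /= addrC.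
congr (_ + _).
  rewrite (reindex_onto (@liftS n) (@preS n)) /=; last by move=> S hS; rewrite liftS_preS.
  by apply: eq_bigl => S; rewrite max_liftS preS_liftS eqxx.
rewrite (reindex_onto (fun S => ord_max |: @liftS n S) (@preS n)) /=; last first.
  by move=> S hS; rewrite liftS_preS1.
by apply: eq_bigl => S; rewrite setU11 preS_liftS1 eqxx.
Qed.
Lemma w_rec p xi n (S : {set 'I_n.+1}) :
  w p xi S = w p xi (preS S) *
    \prod_(a < n) E p (a \in preS S) (ord_max \in S) (xi a) (xi n).
Proof.
rewrite /w big_ord_recr /=.
rewrite [X in _ * X = _]big_pred0 => [|b]; last by rewrite /= ltnNge -ltnS ltn_ord.
rewrite mulr1 -big_split /=; apply: eq_bigr => a _.
rewrite big_mkcond big_ord_recr /= ltn_ord -big_mkcond /=.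
rewrite !inE; congr (_ * _); apply: eq_bigr => b _; by rewrite !inE.
Qed.
Definition upd (xi : nat -> R) n x := fun i => if i == n then x else xi i.

Lemma eq_w p xi xi' n (S : {set 'I_n}) :
  (forall i, (i < n)%N -> xi i = xi' i) -> w p xi S = w p xi' S.
Proof.
move=> h; apply: eq_bigr => a _; apply: eq_bigr => b _.
by rewrite !h ?ltn_ord.
Qed.

Lemma eq_V xi xi' n :
  (forall i, (i < n)%N -> xi i = xi' i) -> V xi n = V xi' n.
Proof.
move=> h; apply: eq_bigr => a _; apply: eq_bigr => b _.
by rewrite !h ?ltn_ord.
Qed.

Lemma L_rec p xi n m :
  L p xi n.+1 m = \sum_(S : {set 'I_n})
    ((if (#|S| == m)%N then w p xi S * \prod_(a < n) E p (a \in S) false (xi a) (xi n) else 0)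
   + (if (#|S|.+1 == m)%N then w p xi S * \prod_(a < n) E p (a \in S) true (xi a) (xi n) else 0)).
Proof.
rewrite /L big_mkcond sum_set_split; apply: eq_bigr => S _.
by rewrite !w_rec preS_liftS preS_liftS1 max_liftS setU11 card_liftS card_liftS1.
Qed.

Lemma prod_if_const n (S : {set 'I_n}) (c : R) (F : 'I_n -> R) :
  \prod_(a < n) ((if a \in S then c else 1) * F a) = c ^+ #|S| * \prod_(a < n) F a.
Proof. by rewrite big_split /= -big_mkcond prodr_const. Qed.

Lemma L_at1 p xi n m :
  L p (upd xi n 1) n.+1 m = \prod_(a < n) (1 - xi a) *
    ((1 - p) ^+ m * L p xi n m + (if m is m'.+1 then p ^+ (n - m') * L p xi n m' else 0)).
Proof.
have ew (S : {set 'I_n}) : w p (upd xi n 1) S = w p xi S.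
  by apply: eq_w => i hi; rewrite /upd ltn_eqF.
have e1 (S : {set 'I_n}) : \prod_(a < n) E p (a \in S) false (upd xi n 1 a) (upd xi n 1 n)
   = (1 - p) ^+ #|S| * \prod_(a < n) (1 - xi a).
  rewrite -prod_if_const; apply: eq_bigr => a _.
  rewrite /upd eqxx ltn_eqF //; rewrite /E /fp; case: (a \in S) => /=; ring.
have e2 (S : {set 'I_n}) : \prod_(a < n) E p (a \in S) true (upd xi n 1 a) (upd xi n 1 n)
   = p ^+ (n - #|S|) * \prod_(a < n) (1 - xi a).
  have -> : (n - #|S|)%N = #|~: S| by rewrite -[n in (n - _)%N](card_ord n) -(cardsC S) addKn.
  rewrite -prod_if_const; apply: eq_bigr => a _.
  rewrite /upd eqxx ltn_eqF // inE; rewrite /E /fp; case: (a \in S) => /=; ring.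
rewrite L_rec big_split /= mulrDr; congr (_ + _).
  rewrite /L !mulr_sumr [RHS]big_mkcond; apply: eq_bigr => S _.
  rewrite ew e1; case: eqP => [<-|_]; [ring | by rewrite ?mulr0].
case: m => [|m].
  by rewrite mulr0; apply: big1 => S _.
rewrite /L !mulr_sumr [RHS]big_mkcond; apply: eq_bigr => S _.
rewrite ew e2 eqSS; case: eqP => [<-|_]; [ring | by rewrite ?mulr0].
Qed.
Lemma prod_split n (F : 'I_n -> 'I_n -> R) (c : 'I_n) :
  \prod_(a : 'I_n) \prod_(b : 'I_n | (a < b)%N) F a b =
  \prod_(a : 'I_n | a != c) \prod_(b : 'I_n | (b != c) && (a < b)%N) F a b *
  \prod_(a : 'I_n | a != c) (if (a < c)%N then F a c else F c a).
Proof.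
rewrite (bigD1 c) //=.
have -> : \prod_(b : 'I_n | (c < b)%N) F c b = \prod_(b : 'I_n | b != c) (if (c < b)%N then F c b else 1).
  by rewrite big_mkcond (bigD1 c) //= ltnn mul1r.
have h (a : 'I_n) : a != c -> \prod_(b : 'I_n | (a < b)%N) F a b =
     (if (a < c)%N then F a c else 1) * \prod_(b : 'I_n | (b != c) && (a < b)%N) F a b.
  by move=> _; rewrite big_mkcond (bigD1 c) //= big_mkcondr.
rewrite (eq_bigr _ h) big_split /= mulrA mulrC; congr (_ * _).
rewrite -big_split /=; apply: eq_bigr => a hac.
case: ltngtP => h1; rewrite ?mulr1 ?mul1r //.
by move: hac; rewrite -(inj_eq val_inj) /= h1 eqxx.
Qed.

Lemma L_rec_upd p xi n m y :
  L p (upd xi n y) n.+1 m = \sum_(S : {set 'I_n})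
    ((if (#|S| == m)%N then w p xi S * \prod_(a < n) E p (a \in S) false (xi a) y else 0)
   + (if (#|S|.+1 == m)%N then w p xi S * \prod_(a < n) E p (a \in S) true (xi a) y else 0)).
Proof.
rewrite L_rec; apply: eq_bigr => S _.
have ew : w p (upd xi n y) S = w p xi S by apply: eq_w => i hi; rewrite /upd ltn_eqF.
have ee b : \prod_(a < n) E p (a \in S) b (upd xi n y a) (upd xi n y n) =
            \prod_(a < n) E p (a \in S) b (xi a) y.
  by apply: eq_bigr => a _; rewrite /upd eqxx ltn_eqF.
by rewrite ew !ee.
Qed.

End Gen.


Section K.
Variable R : comNzRingType.
Lemma alg (W P1 Q1 P2 Q2 e : R) : P1 * Q1 = P2 * Q2 ->
  W * P1 * (- e * Q1) = - (W * P2 * (e * Q2)).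
Proof.
move=> h; have -> : W * P1 * (- e * Q1) = - (W * e * (P1 * Q1)) by ring.
rewrite h; ring.
Qed.

Lemma key_pair (p : R) xi n (S : {set 'I_n}) (c : 'I_n) : c \notin S ->
  w p xi (c |: S) * \prod_(a < n) E p (a \in c |: S) false (xi a) (xi c) =
  - (w p xi S * \prod_(a < n) E p (a \in S) true (xi a) (xi c)).
Proof.
move=> hc; rewrite /w.
rewrite (prod_split _ c).
rewrite (prod_split (fun a b => E p (a \in S) (b \in S) (xi a) (xi b)) c).
rewrite [X in _ * X = _](bigD1 c) //= [X in _ = - (_ * X)](bigD1 c) //= setU11 (negbTE hc).
have m1 a : a != c -> (a \in c |: S) = (a \in S) by move=> h; rewrite in_setU1 (negbTE h).
have -> : \prod_(a < n | a != c) \prod_(b < n | (b != c) && (a < b)%N)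
     E p (a \in c |: S) (b \in c |: S) (xi a) (xi b) =
   \prod_(a < n | a != c) \prod_(b < n | (b != c) && (a < b)%N)
     E p (a \in S) (b \in S) (xi a) (xi b).
  apply: eq_bigr => a ha; apply: eq_bigr => b /andP[hb _]; by rewrite !m1.
have -> : E p true false (xi c) (xi c) = - fp p (xi c) (xi c) by [].
have -> : E p false true (xi c) (xi c) = fp p (xi c) (xi c) by [].
apply: alg.
rewrite -!big_split /=; apply: eq_bigr => a ha.
rewrite !m1 //; case: (a < c)%N; first by rewrite mulrC.
by rewrite !(E_anti p true) !(E_anti p false) !mulrN mulrC.
Qed.
Lemma L_root (p : R) xi n m (c : 'I_n) : L p (upd xi n (xi c)) n.+1 m = 0.
Proof.
pose X (S : {set 'I_n}) := if (#|S| == m)%N then w p xi S * \prod_(a < n) E p (a \in S) false (xi a) (xi c) else 0.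
pose Y (S : {set 'I_n}) := if (#|S|.+1 == m)%N then w p xi S * \prod_(a < n) E p (a \in S) true (xi a) (xi c) else 0.
have z1 (S : {set 'I_n}) : c \in S -> \prod_(a < n) E p (a \in S) true (xi a) (xi c) = 0.
  move=> h; rewrite (bigD1 c) //= h.
  have -> : E p true true (xi c) (xi c) = 0 by rewrite /E subrr.
  by rewrite mul0r.
have z2 (S : {set 'I_n}) : c \notin S -> \prod_(a < n) E p (a \in S) false (xi a) (xi c) = 0.
  move=> h; rewrite (bigD1 c) //= (negbTE h).
  have -> : E p false false (xi c) (xi c) = 0 by rewrite /E subrr.
  by rewrite mul0r.
transitivity (\sum_(S : {set 'I_n} | c \in S) X S + \sum_(S : {set 'I_n} | c \notin S) Y S).
  rewrite L_rec_upd (bigID (fun S : {set 'I_n} => c \in S)) /=; congr (_ + _).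
    apply: eq_bigr => S hS; by rewrite z1 // mulr0 if_same addr0.
  apply: eq_bigr => S hS; by rewrite z2 // mulr0 if_same add0r.
rewrite (reindex_onto (fun S => c |: S) (fun S => S :\ c)) /=; last first.
  by move=> S hS; rewrite setD1K.
rewrite [in Z in Z + _ = _](@eq_bigl _ _ _ _ _ _ (fun S : {set 'I_n} => c \notin S)); last first.
  move=> S; rewrite setU11 /=; case hS: (c \in S) => /=.
    apply/negbTE/eqP => h; move: hS; rewrite -h !inE eqxx //.
  by rewrite setU1K ?hS // eqxx.
rewrite -big_split /= big1 // => S hS; rewrite /X /Y cardsU1 hS add1n.
by case: eqP => _; [rewrite key_pair // addrC subrr | rewrite addr0].
Qed.
End K.


Section Morph.
Variables (R R' : comNzRingType) (f : {rmorphism R -> R'}).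
Lemma fE p sa sb xa xb : f (E p sa sb xa xb) = E (f p) sa sb (f xa) (f xb).
Proof.
by rewrite /E /fp; case: (sa == sb); [|case: sa];
  rewrite ?rmorphN ?rmorphB ?rmorphD ?rmorphM ?rmorphB ?rmorph1.
Qed.
Lemma fw p xi n (S : {set 'I_n}) : f (w p xi S) = w (f p) (fun i => f (xi i)) S.
Proof. rewrite /w rmorph_prod; apply: eq_bigr => a _; rewrite rmorph_prod; apply: eq_bigr => b _; exact: fE. Qed.
Lemma fL p xi n m : f (L p xi n m) = L (f p) (fun i => f (xi i)) n m.
Proof. rewrite /L rmorph_sum; apply: eq_bigr => S _; exact: fw. Qed.
Lemma fV xi n : f (V xi n) = V (fun i => f (xi i)) n.
Proof. rewrite /V rmorph_prod; apply: eq_bigr => a _; rewrite rmorph_prod; apply: eq_bigr => b _; by rewrite rmorphB. Qed.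
Lemma fB p n m : f (B p n m) = B (f p) n m.
Proof.
elim: n m => [|n IH] m /=; first by rewrite rmorph_nat.
rewrite rmorphD rmorphM rmorphXn rmorphB rmorph1 IH; congr (_ + _).
by case: m => [|m]; rewrite ?rmorph0 // rmorphM rmorphXn IH.
Qed.
End Morph.

Section Eq.
Variable R : comNzRingType.
Lemma eq_L (p : R) xi xi' n m : (forall i, xi i = xi' i) -> L p xi n m = L p xi' n m.
Proof. by move=> h; apply: eq_bigr => S _; apply: eq_w => i _. Qed.
Lemma V_rec (xi : nat -> R) n : V xi n.+1 = V xi n * \prod_(a < n) (xi n - xi a).
Proof.
rewrite /V big_ord_recr /=.
rewrite [X in _ * X = _]big_pred0 => [|b]; last by rewrite /= ltnNge -ltnS ltn_ord.
rewrite mulr1 -big_split /=; apply: eq_bigr => a _.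
by rewrite big_mkcond big_ord_recr /= ltn_ord -big_mkcond.
Qed.
End Eq.

Section Size.
Variable R : idomainType.
Lemma sz_Cmul (c : R) (q : {poly R}) : (size (c%:P * q)%R <= size q)%N.
Proof.
case: (c =P 0) => [->|/eqP h]; first by rewrite polyC0 mul0r size_poly0.
by rewrite size_Cmul.
Qed.
Lemma sz_lin (c d : R) : (size (c%:P * 'X + d%:P)%R <= 2)%N.
Proof. by rewrite size_MXaddC; case: ifP => //; rewrite size_polyC; case: (c != 0). Qed.
Lemma sz_prod n (F : 'I_n -> {poly R}) : (forall a, size (F a) <= 2)%N ->
  (size (\prod_(a < n) F a)%R <= n.+1)%N.
Proof.
elim: n F => [|n IH] F hF; first by rewrite big_ord0 size_poly1.
rewrite big_ord_recr /=; apply: leq_trans (size_mul_leq _ _) _.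
have ar (x y : nat) : (x <= 2 -> y <= n.+1 -> (y + x).-1 <= n.+2)%N.
  by move=> h1 h2; rewrite -subn1; lia.
apply: ar; [exact: hF | exact: (IH (fun a => F (widen_ord (leqnSn n) a)))].
Qed.
Lemma sz_sum (I : finType) (P : pred I) (F : I -> {poly R}) k :
  (forall i, size (F i) <= k)%N -> (size (\sum_(i | P i) F i)%R <= k)%N.
Proof.
move=> h; elim/big_ind: _ => //; first by rewrite size_poly0.
by move=> x y hx hy; apply: leq_trans (size_polyD _ _) _; rewrite geq_max hx hy.
Qed.
End Size.


Section Main.
Variable R : idomainType.

Lemma sizeE (p c : R) s b : (size (E p%:P s b c%:P 'X) <= 2)%N.
Proof.
rewrite /E /fp; case: s; case: b => /=.
- by rewrite size_XsubC.
- have -> : - (p%:P + (1 - p%:P) * 'X * c%:P - 'X) = (1 - (1 - p) * c)%:P * 'X + (- p)%:P.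
    rewrite !(polyCB, polyCM, polyCN, polyC1); ring.
  exact: sz_lin.
- have -> : p%:P + (1 - p%:P) * c%:P * 'X - c%:P = ((1 - p) * c)%:P * 'X + (p - c)%:P.
    rewrite !(polyCB, polyCM, polyCN, polyC1); ring.
  exact: sz_lin.
- by rewrite size_XsubC.
Qed.

Theorem main_distinct (p : R) n : forall m (xi : nat -> R),
  (forall i j, (i < n)%N -> (j < n)%N -> xi i = xi j -> i = j) ->
  (forall i, (i < n)%N -> xi i != 1) ->
  L p xi n m = B p n m * V xi n.
Proof.
elim: n => [|n IH] m xi hd h1.
  rewrite /L /V big_ord0 mulr1 /=.
  have hS (S : {set 'I_0}) : S = set0 by apply/setP => -[].
  rewrite big_mkcond (big_pred1 set0); last by move=> S; rewrite /= (hS S) eqxx.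
  by rewrite cards0 /w big_ord0; case: m.
pose g := fun i => (xi i)%:P : {poly R}.
pose Xi := upd g n 'X.
pose P := L p%:P Xi n.+1 m.
pose Q := (B p n.+1 m)%:P * V Xi n.+1.
have ev x : P.[x] = L p (upd xi n x) n.+1 m.
  have -> : P.[x] = horner_eval x P by [].
  rewrite fL /= horner_evalE hornerC; apply: eq_L => i.
  by rewrite /Xi /upd /g; case: (i == n); rewrite horner_evalE ?hornerX ?hornerC.
have evQ x : Q.[x] = B p n.+1 m * V (upd xi n x) n.+1.
  have -> : Q.[x] = horner_eval x Q by [].
  rewrite rmorphM fV /= !horner_evalE hornerC; congr (_ * _); apply: eq_V => i _.
  by rewrite /Xi /upd /g; case: (i == n); rewrite horner_evalE ?hornerX ?hornerC.
have sP : (size P <= n.+1)%N.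
  rewrite /P /Xi L_rec_upd; apply: sz_sum => S.
  apply: leq_trans (size_polyD _ _) _; rewrite geq_max; apply/andP; split;
    case: ifP => _; rewrite ?size_poly0 //; rewrite /g -fw;
    apply: leq_trans (sz_Cmul _ _) _; apply: sz_prod => a; exact: sizeE.
have sQ : (size Q <= n.+1)%N.
  rewrite /Q V_rec (_ : V Xi n = (V xi n)%:P); last first.
    by rewrite fV; apply: eq_V => i hi; rewrite /Xi /upd /g ltn_eqF.
  rewrite mulrA -polyCM; apply: leq_trans (sz_Cmul _ _) _; apply: sz_prod => a.
  by rewrite /Xi /upd /g eqxx ltn_eqF // size_XsubC.
have hdn i j : (i < n)%N -> (j < n)%N -> xi i = xi j -> i = j.
  by move=> hi hj; apply: hd; apply: ltnW.
have h1n i : (i < n)%N -> xi i != 1 by move=> hi; apply: h1; apply: ltnW.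
have IHk k : L p xi n k = B p n k * V xi n by apply: IH.
have hPQ : P - Q = 0.
  apply/eqP; apply: contraT => hne.
  have := max_poly_roots hne (rs := 1 :: [seq xi i | i <- iota 0 n]).
  have -> : all (root (P - Q)) (1 :: [seq xi i | i <- iota 0 n]).
    rewrite /= rootE hornerD hornerN ev evQ; apply/andP; split.
      rewrite L_at1 V_rec (eq_V (xi' := xi)); last by move=> i hi; rewrite /upd ltn_eqF.
      rewrite !IHk /=.
      have -> : \prod_(a < n) (upd xi n 1 n - upd xi n 1 a) = \prod_(a < n) (1 - xi a).
        by apply: eq_bigr => a _; rewrite /upd eqxx ltn_eqF.
      clear ev evQ sP sQ hne; rewrite /P /Q; clear P Q; case: m => [|m] /=; rewrite ?IHk; apply/eqP; ring.
    apply/allP => x /mapP [i]; rewrite mem_iota add0n => /andP[_ hi] ->.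
    rewrite rootE hornerD hornerN ev evQ.
    have -> : xi i = xi (Ordinal hi) by [].
    rewrite L_root V_rec (bigD1 (Ordinal hi)) //= /upd eqxx ltn_eqF // subrr.
    by rewrite mul0r !mulr0 subrr.
  have -> : uniq (1 :: [seq xi i | i <- iota 0 n]).
    rewrite /= map_inj_in_uniq ?iota_uniq ?andbT.
      apply/mapP => -[i]; rewrite mem_iota add0n => /andP[_ hi] e.
      by move: (h1n i hi); rewrite -e eqxx.
    move=> i j; rewrite !mem_iota !add0n => /andP[_ hi] /andP[_ hj]; exact: hdn.
  move=> /(_ isT isT) /=; rewrite size_map size_iota.
  have := leq_trans (size_polyD P (- Q)) _; rewrite size_polyN.
  move=> /(_ n.+1); rewrite geq_max sP sQ => /(_ isT) h2 h3.
  by move: (leq_trans h3 h2); rewrite ltnn.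
have := congr1 (fun q => q.[xi n]) hPQ; rewrite /= hornerD hornerN horner0 ev evQ.
move/eqP; rewrite subr_eq0 => /eqP.
rewrite (@eq_L _ _ _ xi); last by move=> i; rewrite /upd; case: eqP => // ->.
rewrite (eq_V (xi' := xi)) // => i _; rewrite /upd; by case: eqP => // ->.
Qed.
End Main.


Lemma main_all (C : numDomainType) (p : C) xi n m : L p xi n m = B p n m * V xi n.
Proof.
pose Xi i := (xi i)%:P + (i.+1)%:R *: 'X : {poly C}.
have H : L (p%:P) Xi n m = B (p%:P) n m * V Xi n.
  apply: main_distinct.
  - move=> i j _ _ /(congr1 (fun q : {poly C} => q`_1)); rewrite !coefD !coefC !coefZ coefX /= !add0r !mulr1.
    by move=> /eqP; rewrite eqr_nat eqSS => /eqP.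
  - move=> i _; apply/eqP => /(congr1 (fun q : {poly C} => q`_1)).
    rewrite coefD coefC coefZ coefX coef1 /= add0r mulr1 => /eqP.
    by rewrite pnatr_eq0.
have ev i : (Xi i).[0] = xi i by rewrite /Xi hornerD hornerC hornerZ hornerX mulr0 addr0.
move: H => /(congr1 (horner_eval 0)); rewrite rmorphM fL fB fV /= horner_evalE hornerC.
rewrite (@eq_L _ _ _ xi) => [|i]; last by rewrite horner_evalE ev.
rewrite (@eq_V _ _ xi) => [//|i _]; by rewrite horner_evalE ev.
Qed.


Section PQ.
Variables (C : numClosedFieldType) (p : C).
Hypotheses (hp0 : 0 < p) (hp1 : p < 1).

Lemma pq_int_add a b : pq_int p (a + b) = p ^+ a * pq_int p b + (1 - p) ^+ b * pq_int p a.
Proof.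
rewrite /pq_int big_split_ord /= addrC !mulr_sumr; congr (_ + _); apply: eq_bigr => i _ /=.
  have := ltn_ord i => hi.
  have -> : ((a + b).-1 - (a + i) = b.-1 - i)%N by rewrite -!subn1; lia.
  by rewrite exprD; ring.
have := ltn_ord i => hi.
have -> : ((a + b).-1 - i = b + (a.-1 - i))%N by rewrite -!subn1; lia.
by rewrite exprD; ring.
Qed.

Lemma pq_fact_S k : pq_fact p k.+1 = pq_fact p k * pq_int p k.+1.
Proof. by rewrite /pq_fact big_nat_recr. Qed.

Lemma pq_fact0 : pq_fact p 0 = 1.
Proof. by rewrite /pq_fact big_geq. Qed.

Lemma pq_int_neq0 k : pq_int p k.+1 != 0.
Proof.
apply: lt0r_neq0; rewrite /pq_int big_ord_recl /=; apply: ltr_wpDr.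
  apply: sumr_ge0 => i _; apply: mulr_ge0; apply: exprn_ge0; apply: ltW => //.
  by rewrite subr_gt0.
by rewrite expr0 mul1r; apply: exprn_gt0; rewrite subr_gt0.
Qed.

Lemma pq_fact_neq0 k : pq_fact p k != 0.
Proof.
elim: k => [|k IH]; first by rewrite pq_fact0 oner_neq0.
by rewrite pq_fact_S mulf_neq0 // pq_int_neq0.
Qed.

Lemma B0 n : B p n 0%N = 1.
Proof. by elim: n => [|n IH] //=; rewrite IH expr0 mul1r addr0. Qed.

Lemma B_big n m : (n < m)%N -> B p n m = 0.
Proof.
elim: n m => [|n IH] [|m] //= h.
by rewrite IH ?(ltn_trans (ltnSn n)) // ?IH // ?mulr0 ?mul0r ?addr0.
Qed.

Lemma B_fact n m : (m <= n)%N -> B p n m * (pq_fact p (n - m) * pq_fact p m) = pq_fact p n.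
Proof.
elim: n m => [|n IH] [|m] //= h.
- by rewrite pq_fact0 !mulr1.
- by rewrite B0 subn0 pq_fact0 expr0 mul1r addr0 mul1r mulr1.
case: (ltngtP m n) => hmn; last first.
- subst m; have := IH n (leqnn n); rewrite subnn pq_fact0 mul1r => h0.
  rewrite subnn pq_fact0 mul1r B_big // mulr0 add0r expr0 mul1r pq_fact_S.
  by rewrite mulrA h0.
- by move: h; rewrite ltnS leqNgt hmn.
set d := (n - m.+1)%N.
have hd : (n - m = d.+1)%N by rewrite /d; lia.
have h1 := IH m.+1 hmn; rewrite -/d pq_fact_S in h1.
have h0 := IH m (ltnW hmn); rewrite hd !pq_fact_S in h0.
have hI := pq_int_add d.+1 m.+1.
have e : (d.+1 + m.+1 = n.+1)%N by rewrite /d; lia.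
rewrite e in hI.
rewrite subSS hd !pq_fact_S.
transitivity ((1 - p) ^+ m.+1 * pq_int p d.+1 *
   (B p n m.+1 * (pq_fact p d * (pq_fact p m * pq_int p m.+1))) +
   p ^+ d.+1 * pq_int p m.+1 * (B p n m * (pq_fact p d * pq_int p d.+1 * pq_fact p m))).
  ring.
rewrite h1 h0 hI; ring.
Qed.

Lemma B_pq n m : B p n m = pq_binom p n m.
Proof.
rewrite /pq_binom; case: leqP => h; last exact: B_big.
by rewrite -(B_fact h) mulfK // mulf_neq0 // pq_fact_neq0.
Qed.
End PQ.


Unset Implicit Arguments.

Lemma mkc (C : numClosedFieldType) n (c : 'I_n -> 'I_n -> bool) (F : 'I_n -> 'I_n -> C) :
  \prod_(a : 'I_n) \prod_(b : 'I_n | (a < b)%N && c a b) F a b =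
  \prod_(a : 'I_n) \prod_(b : 'I_n | (a < b)%N) (if c a b then F a b else 1).
Proof. by apply: eq_bigr => a _; rewrite big_mkcondr. Qed.

Theorem lemma2p5 (C : numClosedFieldType) (p : C) (n m : nat)
  (xi : nat -> C)
  (hp0 : 0 < p) (hp1 : p < 1)
  (hn : (1 <= n)%N) (hm : (m <= n)%N)
  (hden : forall a b : 'I_n, (a < b)%N ->
           p + (1 - p) * xi a * xi b - xi a != 0) :
  \sum_(S : {set 'I_n} | #|S| == m)
     ((\prod_(a : 'I_n) \prod_(b : 'I_n | [&& (a < b)%N, a \notin S & b \notin S])
          Tba p xi b a)
    * (\prod_(a : 'I_n) \prod_(b : 'I_n | [&& (a < b)%N, a \in S & b \in S])
          Tba p xi b a)
    * (\prod_(a : 'I_n) \prod_(b : 'I_n | [&& (a < b)%N, a \in S & b \notin S])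
          Sba p xi b a))
  = pq_binom p n m *
    \prod_(a : 'I_n) \prod_(b : 'I_n | (a < b)%N) Tba p xi b a.
Proof.
have hD : \prod_(a : 'I_n) \prod_(b : 'I_n | (a < b)%N) (p + (1 - p) * xi a * xi b - xi a) != 0.
  by apply/prodf_neq0 => a _; apply/prodf_neq0 => b hab; exact: hden.
apply: (mulIf hD).
have -> : pq_binom p n m * \prod_(a : 'I_n) \prod_(b : 'I_n | (a < b)%N) Tba p xi b a *
   \prod_(a : 'I_n) \prod_(b : 'I_n | (a < b)%N) (p + (1 - p) * xi a * xi b - xi a)
   = B p n m * V xi n.
  rewrite -(B_pq hp0 hp1) -mulrA; congr (_ * _); rewrite /V -big_split /=.
  apply: eq_bigr => a _; rewrite -big_split /=; apply: eq_bigr => b hab.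
  by rewrite /Tba divfK // hden.
rewrite -main_all /L mulr_suml; apply: eq_bigr => S _.
rewrite (@mkc _ _ (fun a b => (a \notin S) && (b \notin S))).
rewrite (@mkc _ _ (fun a b => (a \in S) && (b \in S))).
rewrite (@mkc _ _ (fun a b => (a \in S) && (b \notin S))).
rewrite /w -!big_split /=; apply: eq_bigr => a _; rewrite -!big_split /=.
apply: eq_bigr => b hab.
have hd := hden a b hab.
rewrite /E /fp /Tba /Sba; case: (a \in S); case: (b \in S) => /=;
  rewrite ?mul1r ?mulr1 ?divfK //; ring.
Qed.
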